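(* Let $S\subset\mathbb{R}^q$ be compact, let $s\in S$, let $c_1,\dots,c_M\in S$, and let $(\xi_k)_{k\in\mathbb{N}}\subset\mathbb{R}^q$ be bounded. Suppose $\ell(x,\xi)=\rho(\|x-\xi\|)$ where $\rho:[0,\infty)\to(0,1)$ is continuous and injective. Then for every $\delta>0$ there exists $\epsilon\in(0,1)$ such that for all $k\in\mathbb{N}$ and all $i\in\{1,\dots,M\}$, $$\big|\,\|\xi_k-s\|-\|\xi_k-c_i\|\,\big|\ge\delta\implies|\ell(s,\xi_k)-\ell(c_i,\xi_k)|\ge\epsilon.$$ *)

(* Defs.v *)
From HB Require Import structures.
From mathcomp Require Import all_boot all_order all_algebra.
From mathcomp Require Import all_classical all_reals all_analysis.
Set Implicit Arguments. Unset Strict Implicit. Unset Printing Implicit Defensive.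
Import Order.TTheory GRing.Theory Num.Theory.
Local Open Scope ring_scope.

Definition enorm (R : realType) (q : nat) (v : 'rV[R]_q) : R :=
  Num.sqrt (\sum_(j < q) (v ord0 j) ^+ 2).

(* Main.v *)
Require Import Defs.
From HB Require Import structures.
From mathcomp Require Import all_boot all_order all_algebra.
From mathcomp Require Import all_classical all_reals all_analysis.
From mathcomp Require Import lra.
Import Order.TTheory GRing.Theory Num.Theory numFieldNormedType.Exports.
Local Open Scope classical_set_scope.
Local Open Scope ring_scope.

Lemma finmin_pos (R : realType) (g : nat -> R) (N : nat) :
  (forall j, 0 < g j) -> exists2 eps, 0 < eps & forall j, (j <= N)%N -> eps <= g j.
Proof.
move=> gp; elim: N => [|N [e e0 He]].
  by exists (g 0%N) => // j; rewrite leqn0 => /eqP ->.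
exists (Num.min e (g N.+1)); first by rewrite lt_min e0 gp.
move=> j; rewrite leq_eqVlt => /orP[/eqP ->|jN]; first by rewrite ge_min lexx orbT.
by rewrite ge_min He.
Qed.

Lemma key (R : realType) (f : R -> R) (h L : R) :
  0 < h -> 0 <= L ->
  {in `[0, +oo[%R &, {homo f : x y / x <= y}} ->
  {in `[0, +oo[%R &, injective f} ->
  exists2 eps, 0 < eps & forall a b, 0 <= b -> b <= L -> b + h *+ 2 <= a ->
    eps <= `|f a - f b|.
Proof.
move=> h0 L0 fm fi.
pose g j := f (j.+2%:R * h) - f (j.+1%:R * h).
have I0 (x : R) : 0 <= x -> x \in `[0, +oo[%R by move=> x0; rewrite in_itv /= x0.
have Ij j : (j%:R * h) \in `[0, +oo[%R.
  by apply: I0; apply: mulr_ge0 => //; exact: ltW.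

have gp j : 0 < g j.
  rewrite /g subr_gt0 lt_def fm ?Ij ?andbT //; last by rewrite ler_wpM2r ?ler_nat ?ltW.
  apply/negP => /eqP /fi; rewrite !Ij => /(_ isT isT).
  by move/(mulIf (lt0r_neq0 h0))/eqP; rewrite eqr_nat (gtn_eqF (ltnSn _)).
have [e e0 He] := @finmin_pos R g (Num.truncn (L / h)) gp.
exists e => // a b b0 bL ba.
set j := Num.truncn (b / h).
have hi : 0 < h^-1 by rewrite invr_gt0.
have bh0 : 0 <= b / h by apply: divr_ge0 => //; exact: ltW.
have /andP[jl jr] := truncn_itv bh0.
have jN : (j <= Num.truncn (L / h))%N.
  rewrite truncn_le_nat; apply: (le_lt_trans _ (truncnS_gt _)).
  by rewrite ler_pM2r ?invr_gt0.
have a0 : 0 <= a.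
  apply: (le_trans _ ba); apply: addr_ge0 => //; apply: mulrn_wge0; exact: ltW.
apply: (@le_trans _ _ (g j)); first exact: He. apply: (le_trans _ (ler_norm _)).
rewrite /g lerB //.
  apply: fm; rewrite ?Ij ?I0 //.
  apply: le_trans ba.
  rewrite -[j.+2]addn2 natrD mulrDl [2 * h]mulr_natl lerD2r.
  by rewrite -(ler_pM2r hi) mulfK ?lt0r_neq0.
apply: fm; rewrite ?Ij ?I0 //.
rewrite -(ler_pM2r hi) mulfK ?lt0r_neq0 //; exact: ltW.
Qed.

Lemma key2 (R : realType) (rho : R -> R) (delta L : R) :
  0 < delta -> 0 <= L ->
  {within `[0, +oo[, continuous rho} ->
  {in `[0, +oo[%R &, injective rho} ->
  exists2 eps, 0 < eps & forall a b, 0 <= a -> 0 <= b -> a <= L -> b <= L ->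
    delta <= `|a - b| -> eps <= `|rho a - rho b|.
Proof.
move=> d0 L0 rc ri.
have hm := itv_continuous_inj_mono rc ri.
suff [f [fm fi fr]] : exists f : R -> R,
  [/\ {in `[0, +oo[%R &, {homo f : x y / x <= y}},
      {in `[0, +oo[%R &, injective f} &
      forall a b, `|f a - f b| = `|rho a - rho b| ].
  have h0 : 0 < delta / 2 by rewrite divr_gt0.
  have [e e0 He] := @key R f _ L h0 L0 fm fi.
  exists e => // a b a0 b0 aL bL.
  rewrite ler_normr => /orP[] dab.
    rewrite -fr; apply: He => //.
    have -> : delta / 2 *+ 2 = delta by rewrite -mulr_natr mulfVK.
    lra.
  rewrite -fr distrC; apply: He => //.
  have -> : delta / 2 *+ 2 = delta by rewrite -mulr_natr mulfVK.
  lra.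
case: hm => hm.
  exists rho; split => // x y xI yI; rewrite le_eqVlt => /orP[/eqP -> //|xy].
  exact/ltW/hm.
exists (fun x => - rho x); split.
- move=> x y xI yI; rewrite le_eqVlt => /orP[/eqP -> //|xy].
  by rewrite lerN2; apply/ltW/hm.
- by move=> x y xI yI /oppr_inj; apply: ri.
- by move=> a b; rewrite -opprD normrN.
Qed.

Lemma enorm_ge0 (R : realType) q (v : 'rV[R]_q) : 0 <= enorm v.
Proof. exact: sqrtr_ge0. Qed.

Lemma enormB (R : realType) q (x y : 'rV[R]_q) : enorm (x - y) = enorm (y - x).
Proof.
rewrite /enorm; congr Num.sqrt; apply: eq_bigr => j _.
by rewrite !mxE -opprB sqrrN.
Qed.

Lemma enorm_bound (R : realType) q (x y : 'rV[R]_q) a b :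
  enorm x <= a -> enorm y <= b ->
  enorm (x - y) <= Num.sqrt (2 * (a ^+ 2 + b ^+ 2)).
Proof.
move=> xa yb.
have sx : \sum_(j < q) (x ord0 j) ^+ 2 <= a ^+ 2.
  have s0 : 0 <= \sum_(j < q) (x ord0 j) ^+ 2 by apply: sumr_ge0 => j _; exact: sqr_ge0.
  rewrite -(sqr_sqrtr s0); have := @enorm_ge0 R q x; rewrite /enorm in xa * => e0; nra.
have sy : \sum_(j < q) (y ord0 j) ^+ 2 <= b ^+ 2.
  have s0 : 0 <= \sum_(j < q) (y ord0 j) ^+ 2 by apply: sumr_ge0 => j _; exact: sqr_ge0.
  rewrite -(sqr_sqrtr s0); have := @enorm_ge0 R q y; rewrite /enorm in yb * => e0; nra.
rewrite /enorm ler_sqrt; last first.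
  by apply: mulr_ge0 => //; apply: addr_ge0; exact: sqr_ge0.
apply: (@le_trans _ _ (\sum_(j < q) 2 * ((x ord0 j) ^+ 2 + (y ord0 j) ^+ 2))).
  apply: ler_sum => j _; rewrite !mxE; have := sqr_ge0 (x ord0 j + y ord0 j); nra.
rewrite -mulr_sumr big_split /=.
apply: ler_wpM2l => //; exact: lerD.
Qed.

Arguments enorm_ge0 {R q} v.
Arguments enormB {R q} x y.
Arguments enorm_bound {R q} x y a b.
Arguments key2 {R rho delta L}.

Theorem lemma1 (R : realType) (q : nat) (S : set 'rV[R]_q) (s : 'rV[R]_q)
  (M : nat) (c : 'I_M -> 'rV[R]_q) (xi : nat -> 'rV[R]_q)
  (rho : R -> R) (ell : 'rV[R]_q -> 'rV[R]_q -> R) :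
  compact S -> S s -> (forall i, S (c i)) ->
  (exists B : R, forall k, enorm (xi k) <= B) ->
  {within `[0, +oo[, continuous rho} ->
  (forall x : R, 0 <= x -> 0 < rho x < 1) ->
  {in `[0, +oo[%R &, injective rho} ->
  (forall x y, ell x y = rho (enorm (x - y))) ->
  forall delta : R, 0 < delta ->
  exists eps : R, 0 < eps < 1 /\
    forall (k : nat) (i : 'I_M),
      delta <= `| enorm (xi k - s) - enorm (xi k - c i) | ->
      eps <= `| ell s (xi k) - ell (c i) (xi k) |.
Proof.
move=> _ _ _ [B HB] rc _ ri hell delta d0.
pose C := enorm s + \sum_(i < M) enorm (c i).
have sum0 : 0 <= \sum_(i < M) enorm (c i) by apply: sumr_ge0 => i _; exact: enorm_ge0.
have Cs : enorm s <= C by rewrite /C lerDl.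
have Cc i : enorm (c i) <= C.
  rewrite /C (bigD1 i) //=.
  have : 0 <= \sum_(j < M | j != i) enorm (c j) by apply: sumr_ge0 => j _; exact: enorm_ge0.
  have := enorm_ge0 s; lra.
pose L := Num.sqrt (2 * (B ^+ 2 + C ^+ 2)).
have [e e0 He] := @key2 R rho delta L d0 (sqrtr_ge0 _) rc ri.
exists (Num.min e (1/2)); split.
  rewrite lt_min gt_min e0 /=; apply/andP; split; lra.
move=> k i dk.
rewrite !hell (enormB s) (enormB (c i)).
rewrite ge_min; apply/orP; left.
apply: He => //; [exact: enorm_ge0|exact: enorm_ge0|exact: enorm_bound|exact: enorm_bound].
Qed.
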